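(* Let $N,\mu,\beta,\sigma,\gamma,p>0$ and $0<\rho<1$ and consider the system $$S'=\mu N-\tfrac{\beta(1-\rho)}{N}SI-\tfrac{p}{N}S-\mu S,\qquad E'=\tfrac{\beta(1-\rho)}{N}SI-(\sigma+\mu)E,\qquad I'=\sigma E-(\gamma+\mu)I$$ on $\Omega=\{(S,E,I)\in\mathbb{R}_+^3: S+E+I\le N\}$. Let $\mathcal{R}_0=\dfrac{\mu N\sigma\beta(1-\rho)}{(\sigma+\mu)(\gamma+\mu)(p+\mu N)}$. If $\mathcal{R}_0>1$, then the endemic equilibrium $(S^e,E^e,I^e)$, with $$S^e=\frac{(\sigma+\mu)(\gamma+\mu)N}{\sigma\beta(1-\rho)},\quad I^e=\frac{\mu N\sigma\beta(1-\rho)-(\sigma+\mu)(\gamma+\mu)(p+\mu N)}{(\sigma+\mu)(\gamma+\mu)\beta(1-\rho)},\quad E^e=\frac{\gamma+\mu}{\sigma}I^e,$$ is globally asymptotically stable in the interior of $\Omega$.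
   Context: Global asymptotic stability in the interior of $\Omega$: the equilibrium is stable and every solution starting in the interior of $\Omega$ converges to it as $t\to+\infty$. *)

(* Defs.v *)
From Stdlib Require Import Reals Lra.
From Coquelicot Require Import Coquelicot.
Open Scope R_scope.

Definition fS (N mu beta p rho : R) (S E I : R) : R :=
  mu * N - beta * (1 - rho) / N * S * I - p / N * S - mu * S.
Definition fE (N mu beta sigma rho : R) (S E I : R) : R :=
  beta * (1 - rho) / N * S * I - (sigma + mu) * E.
Definition fI (mu sigma gamma : R) (S E I : R) : R :=
  sigma * E - (gamma + mu) * I.

Definition in_interior_Omega (N S E I : R) : Prop :=
  0 < S /\ 0 < E /\ 0 < I /\ S + E + I < N.

Definition is_solution (N mu beta sigma gamma p rho : R)
    (S E I : R -> R) : Prop :=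
  (forall t, 0 < t ->
     is_derive S t (fS N mu beta p rho (S t) (E t) (I t)) /\
     is_derive E t (fE N mu beta sigma rho (S t) (E t) (I t)) /\
     is_derive I t (fI mu sigma gamma (S t) (E t) (I t))) /\
  filterlim S (at_right 0) (locally (S 0)) /\
  filterlim E (at_right 0) (locally (E 0)) /\
  filterlim I (at_right 0) (locally (I 0)).

Definition basic_R0 (N mu beta sigma gamma p rho : R) : R :=
  mu * N * sigma * beta * (1 - rho) /
    ((sigma + mu) * (gamma + mu) * (p + mu * N)).

Definition Se (N mu beta sigma gamma rho : R) : R :=
  (sigma + mu) * (gamma + mu) * N / (sigma * beta * (1 - rho)).
Definition Ie (N mu beta sigma gamma p rho : R) : R :=
  (mu * N * sigma * beta * (1 - rho)
     - (sigma + mu) * (gamma + mu) * (p + mu * N)) /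
    ((sigma + mu) * (gamma + mu) * beta * (1 - rho)).
Definition Ee (N mu beta sigma gamma p rho : R) : R :=
  (gamma + mu) / sigma * Ie N mu beta sigma gamma p rho.

Definition dist3 (a1 a2 a3 b1 b2 b3 : R) : R :=
  sqrt ((a1 - b1) ^ 2 + (a2 - b2) ^ 2 + (a3 - b3) ^ 2).

Definition GAS_interior (N mu beta sigma gamma p rho xs xe xi : R) : Prop :=
  (forall eps, 0 < eps -> exists delta, 0 < delta /\
     forall S E I : R -> R,
       is_solution N mu beta sigma gamma p rho S E I ->
       in_interior_Omega N (S 0) (E 0) (I 0) ->
       dist3 (S 0) (E 0) (I 0) xs xe xi < delta ->
       forall t, 0 <= t -> dist3 (S t) (E t) (I t) xs xe xi < eps) /\
  (forall S E I : R -> R,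
     is_solution N mu beta sigma gamma p rho S E I ->
     in_interior_Omega N (S 0) (E 0) (I 0) ->
     is_lim S p_infty xs /\ is_lim E p_infty xe /\ is_lim I p_infty xi).

(* Main.v *)
Require Import Defs.
From Stdlib Require Import Reals Lra Psatz Classical.
From Coquelicot Require Import Coquelicot.
Open Scope R_scope.


Definition phi (u : R) : R := u - 1 - ln u.

Lemma ln_le_sub1 u : 0 < u -> ln u <= u - 1.
Proof. intros Hu. pose proof (exp_ineq1_le (ln u)). rewrite exp_ln in H; lra. Qed.

Lemma ln_ge_1inv u : 0 < u -> 1 - / u <= ln u.
Proof. intros Hu. pose proof (ln_le_sub1 (/ u) ltac:(apply Rinv_0_lt_compat; lra)).
  rewrite ln_Rinv in H; lra. Qed.

Lemma phi_ge0 u : 0 < u -> 0 <= phi u.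
Proof. intros; unfold phi; pose proof (ln_le_sub1 u H); lra. Qed.

Lemma phi_le u : 0 < u -> phi u <= (u - 1) ^ 2 / u.
Proof. intros Hu; unfold phi; pose proof (ln_ge_1inv u Hu).
  replace ((u - 1) ^ 2 / u) with (u - 2 + / u) by (field; lra). lra. Qed.

Lemma phi_lnlow u : 0 < u -> - ln u - 1 <= phi u.
Proof. intros; unfold phi; lra. Qed.

Lemma ln2_lt1 : ln 2 < 1.
Proof. rewrite <- (ln_exp 1). apply ln_increasing; [lra|].
  pose proof (exp_ineq1 1 ltac:(lra)); lra. Qed.

Lemma phi_high u : 0 < u -> u / 2 - 2 <= phi u.
Proof. intros Hu; unfold phi.
  pose proof (ln_le_sub1 (u/2) ltac:(lra)).
  unfold Rdiv in H; rewrite ln_mult in H by lra. rewrite ln_Rinv in H by lra.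
  pose proof ln2_lt1. lra. Qed.

Lemma phi_sqrt u : 0 < u -> (sqrt u - 1) ^ 2 <= phi u.
Proof. intros Hu; unfold phi.
  pose proof (sqrt_lt_R0 u Hu) as Hs. pose proof (sqrt_sqrt u ltac:(lra)) as Hss.
  pose proof (ln_le_sub1 (sqrt u) Hs).
  assert (ln u = 2 * ln (sqrt u)).
  { rewrite <- Hss at 1. rewrite ln_mult by lra. ring. }
  rewrite H0. nra. Qed.

Lemma phi_far u r : 0 < u -> 0 < r <= 1 -> r <= Rabs (u - 1) -> r ^ 2 / 9 <= phi u.
Proof. intros Hu Hr Hd.
  pose proof (phi_sqrt u Hu).
  pose proof (sqrt_lt_R0 u Hu) as Hs. pose proof (sqrt_sqrt u ltac:(lra)) as Hss.
  set (w := sqrt u) in *.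
  assert (u - 1 = (w - 1) * (w + 1)) by (rewrite <- Hss; ring).
  rewrite H0 in Hd. rewrite Rabs_mult in Hd. rewrite (Rabs_right (w+1)) in Hd by lra.
  destruct (Rle_dec w 2).
  - assert (r / 3 <= Rabs (w - 1)).
    { apply Rmult_le_reg_r with (w + 1); [lra|]. 
      apply Rle_trans with r; [|lra]. 
      assert (0 <= Rabs (w-1)) by apply Rabs_pos. nra. }
    assert ((r/3)^2 <= (w-1)^2).
    { rewrite <- (pow2_abs (w-1)). apply pow_incr; split; lra. }
    replace (r^2/9) with ((r/3)^2) by field; lra.
  - assert (2 < w) by lra. assert (1 <= (w-1)^2) by nra. assert (r^2 <= 1) by nra. lra.
Qed.


Ltac pos := repeat (apply Rmult_lt_0_compat || apply Rinv_0_lt_compat || apply Rdiv_lt_0_compat); auto; try lra.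
Ltac neq := apply Rgt_not_eq; unfold Rgt; pos.

Lemma amgm3 x y z : 0 < x -> 0 < y -> 0 < z -> x * y * z = 1 ->
  (z - 1) ^ 2 / (2 * (z + 1)) <= x + y + z - 3.
Proof.
  intros Hx Hy Hz Hp.
  pose proof (sqrt_lt_R0 z Hz) as Hw. pose proof (sqrt_sqrt z ltac:(lra)) as Hww.
  set (w := sqrt z) in *.
  assert (Hxy : 2 <= (x + y) * w).
  { assert (4 <= ((x + y) * w) ^ 2).
    { replace (((x + y) * w) ^ 2) with ((x - y) ^ 2 * z + 4 * (x * y * z)) by (rewrite <- Hww; ring).
      rewrite Hp. assert (0 <= (x - y) ^ 2 * z) by (apply Rmult_le_pos; [apply pow2_ge_0|lra]). lra. }
    assert (0 < (x + y) * w) by nra.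
    destruct (Rle_lt_dec 2 ((x + y) * w)); auto. nra. }
  assert (2 / w <= x + y).
  { apply Rmult_le_reg_r with w; auto. unfold Rdiv. rewrite Rmult_assoc, Rinv_l by lra. lra. }
  rewrite <- Hww.
  assert (Hk : (w * w - 1) ^ 2 / (2 * (w * w + 1)) <= 2 / w + w * w - 3).
  { apply Rmult_le_reg_r with (2 * (w * w + 1) * w). nra.
    unfold Rdiv. 
    replace ((w * w - 1) ^ 2 * / (2 * (w * w + 1)) * (2 * (w * w + 1) * w)) with ((w * w - 1) ^ 2 * w) by (field; nra).
    replace ((2 * / w + w * w - 3) * (2 * (w * w + 1) * w)) with (2 * (w * w + 1) * (2 + w*w*w - 3 * w)) by (field; nra).
    assert (2 + w*w*w - 3*w = (w-1)^2 * (w+2)) by ring. rewrite H0.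
    assert ((w*w-1)^2 * w = (w-1)^2 * ((w+1)^2 * w)) by ring. rewrite H1.
    assert (0 <= (w-1)^2) by apply pow2_ge_0. assert ((w+1)^2*w <= 2*(w*w+1)*(w+2)) by nra.
    replace (2 * (w * w + 1) * ((w - 1) ^ 2 * (w + 2))) with ((w-1)^2 * (2*(w*w+1)*(w+2))) by ring.
    apply Rmult_le_compat_l; auto. }
  lra.
Qed.

Definition fS' Lam b d (s e i : R) := Lam - b * s * i - d * s.
Definition fE' b a (s e i : R) := b * s * i - a * e.
Definition fI' sg g (s e i : R) := sg * e - g * i.

Definition dV Lam b d a sg g Ss Es Is (s e i : R) :=
  (1 - Ss / s) * fS' Lam b d s e i + (1 - Es / e) * fE' b a s e i
  + a / sg * (1 - Is / i) * fI' sg g s e i.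

Lemma dV_identity Lam b d a sg g Ss Es Is s e i :
  0 < a -> 0 < sg -> 0 < Ss -> 0 < Is -> 0 < b ->
  Es = b * Ss * Is / a -> g = sg * b * Ss / a -> Lam = b * Ss * Is + d * Ss ->
  0 < s -> 0 < e -> 0 < i ->
  dV Lam b d a sg g Ss Es Is s e i =
  - (d * (s - Ss) ^ 2 / s + b * Ss * Is * (Ss / s + s * i * Es / (Ss * Is * e) + e * Is / (Es * i) - 3)).
Proof.
  intros. subst. unfold dV, fS', fE', fI'. field. repeat split; nra.
Qed.

Lemma dV_bound Lam b d a sg g Ss Es Is s e i :
  0 < a -> 0 < sg -> 0 < Ss -> 0 < Is -> 0 < b -> 0 < d ->
  Es = b * Ss * Is / a -> g = sg * b * Ss / a -> Lam = b * Ss * Is + d * Ss ->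
  0 < s -> 0 < e -> 0 < i ->
  d * (s - Ss) ^ 2 / s <= - dV Lam b d a sg g Ss Es Is s e i /\
  b * Ss * Is * ((e * Is - Es * i) ^ 2 / (2 * (Es * i) * (e * Is + Es * i)))
     <= - dV Lam b d a sg g Ss Es Is s e i.
Proof.
  intros. assert (HEs : 0 < Es) by (rewrite H5; pos).
  rewrite (dV_identity Lam b d a sg g Ss Es Is s e i) by auto.
  pose proof (amgm3 (Ss / s) (s * i * Es / (Ss * Is * e)) (e * Is / (Es * i))) as Ham.
  assert (Hx : 0 < Ss / s) by (apply Rdiv_lt_0_compat; auto).
  assert (Hy : 0 < s * i * Es / (Ss * Is * e)) by pos.
  assert (Hz : 0 < e * Is / (Es * i)) by pos.
  specialize (Ham Hx Hy Hz ltac:(field; repeat split; neq)).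
  assert (Heq : (e * Is / (Es * i) - 1) ^ 2 / (2 * (e * Is / (Es * i) + 1))
     = (e * Is - Es * i) ^ 2 / (2 * (Es * i) * (e * Is + Es * i))).
  { assert (0 < e * Is + Es * i) by (apply Rplus_lt_0_compat; pos). assert (0 < e * Is / (Es * i) + 1) by (apply Rplus_lt_0_compat; pos). field. repeat split; neq. }
  rewrite Heq in Ham.
  assert (0 <= d * (s - Ss) ^ 2 / s).
  { apply Rdiv_le_0_compat; auto. apply Rmult_le_pos; [lra|apply pow2_ge_0]. }
  assert (0 <= b * Ss * Is) by (left; pos).
  assert (0 <= (e * Is - Es * i) ^ 2 / (2 * (Es * i) * (e * Is + Es * i))).
  { apply Rdiv_le_0_compat; [apply pow2_ge_0|]. apply Rmult_lt_0_compat; [pos|]. apply Rplus_lt_0_compat; pos. }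
  set (T := Ss / s + s * i * Es / (Ss * Is * e) + e * Is / (Es * i) - 3) in *.
  set (Q := (e * Is - Es * i) ^ 2 / (2 * (Es * i) * (e * Is + Es * i))) in *.
  assert (0 <= b * Ss * Is * T) by (apply Rmult_le_pos; lra).
  split. lra. assert (b * Ss * Is * Q <= b * Ss * Is * T) by (apply Rmult_le_compat_l; lra). lra.
Qed.


Lemma rc_eps (f : R -> R) x0 : filterlim f (at_right x0) (locally (f x0)) ->
  forall eps, 0 < eps -> exists delta, 0 < delta /\
    forall s, x0 < s < x0 + delta -> Rabs (f s - f x0) < eps.
Proof.
  intros Hf eps Heps.
  destruct (proj1 (filterlim_locally f (f x0)) Hf (mkposreal eps Heps)) as [d Hd].
  exists d. split. apply cond_pos. intros s Hs. apply (Hd s).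
  - unfold ball; simpl; unfold AbsRing_ball, abs, minus, plus, opp; simpl. apply Rabs_def1; lra.
  - lra.
Qed.

Lemma cont_eps (f : R -> R) x : ex_derive f x ->
  forall eps, 0 < eps -> exists delta, 0 < delta /\
    forall s, Rabs (s - x) < delta -> Rabs (f s - f x) < eps.
Proof.
  intros Hd eps Heps. pose proof (ex_derive_continuous f x Hd) as Hc.
  destruct (proj1 (filterlim_locally f (f x)) Hc (mkposreal eps Heps)) as [d Hd'].
  exists d. split. apply cond_pos. intros s Hs. apply (Hd' s). exact Hs.
Qed.

Lemma mvt_closed (f df : R -> R) u v : u <= v ->
  (forall t, u <= t <= v -> is_derive f t (df t)) ->
  exists c, u <= c <= v /\ f v - f u = df c * (v - u).
Proof.
  intros Huv Hd.
  destruct (MVT_gen f u v df) as [c [Hc Heq]].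
  - intros x Hx. rewrite Rmin_left in Hx by lra. rewrite Rmax_right in Hx by lra. apply Hd; lra.
  - intros x Hx. rewrite Rmin_left in Hx by lra. rewrite Rmax_right in Hx by lra.
    apply continuity_pt_filterlim. apply (ex_derive_continuous f x). exists (df x). apply Hd; lra.
  - rewrite Rmin_left in Hc by lra. rewrite Rmax_right in Hc by lra. exists c; auto.
Qed.

Lemma mvt_noninc (f df : R -> R) u v : u <= v ->
  (forall t, u <= t <= v -> is_derive f t (df t) /\ df t <= 0) -> f v <= f u.
Proof.
  intros Huv Hd. destruct (mvt_closed f df u v Huv) as [c [Hc Heq]].
  - intros t Ht; apply Hd; auto.
  - assert (df c <= 0) by (apply Hd; auto). nra.
Qed.

Lemma mvt_lip (f df : R -> R) u v L : u <= v ->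
  (forall t, u <= t <= v -> is_derive f t (df t) /\ Rabs (df t) <= L) ->
  Rabs (f v - f u) <= L * (v - u).
Proof.
  intros Huv Hd. destruct (mvt_closed f df u v Huv) as [c [Hc Heq]].
  - intros t Ht; apply Hd; auto.
  - rewrite Heq, Rabs_mult, (Rabs_right (v - u)) by lra.
    apply Rmult_le_compat_r; [lra| apply Hd; auto].
Qed.

Lemma barbalat (H dH h dh : R -> R) T0 kappa L :
  0 < kappa ->
  (forall t, T0 < t -> is_derive H t (dH t) /\ kappa * Rabs (h t) <= Rabs (dH t)) ->
  (forall t, T0 < t -> is_derive h t (dh t) /\ Rabs (dh t) <= L) ->
  (forall eta, 0 < eta -> exists T, forall t s, T <= t -> T <= s -> Rabs (H t - H s) < eta) ->
  forall eps, 0 < eps -> exists T, forall t, T <= t -> Rabs (h t) < eps.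
Proof.
  intros Hk HH Hh HC eps Heps.
  set (L' := Rabs L + 1).
  assert (HL' : 0 < L') by (unfold L'; pose proof (Rabs_pos L); lra).
  set (delta := eps / (2 * L')).
  assert (Hdel : 0 < delta) by (unfold delta; apply Rdiv_lt_0_compat; lra).
  destruct (HC (kappa * eps * delta / 2)) as [T1 HT1].
  { apply Rdiv_lt_0_compat; [|lra]. apply Rmult_lt_0_compat; [apply Rmult_lt_0_compat|]; lra. }
  exists (Rmax T1 (T0 + 1)). intros t Ht.
  pose proof (Rmax_l T1 (T0+1)). pose proof (Rmax_r T1 (T0+1)).
  destruct (Rlt_le_dec (Rabs (h t)) eps) as [|Hbad]; auto. exfalso.
  assert (Hlow : forall s, t <= s <= t + delta -> eps / 2 <= Rabs (h s)).
  { intros s Hs.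
    assert (Q1 : Rabs (h s - h t) <= L' * (s - t)).
    { apply mvt_lip with dh; [lra|]. intros x Hx. destruct (Hh x ltac:(lra)) as [A B].
      split; auto. unfold L'. pose proof (Rle_abs L). lra. }
    assert (Q2 : L' * (s - t) <= eps / 2).
    { apply Rle_trans with (L' * delta). apply Rmult_le_compat_l; lra.
      unfold delta. right. field. lra. }
    pose proof (Rabs_triang_inv (h t) (h t - h s)) as Q3.
    replace (h t - (h t - h s)) with (h s) in Q3 by ring.
    rewrite Rabs_minus_sym in Q1. lra. }
  destruct (mvt_closed H dH t (t + delta)) as [c [Hc Heq]]. lra.
  { intros x Hx. apply HH; lra. }
  assert (A1 : kappa * Rabs (h c) <= Rabs (dH c)) by (apply HH; lra).
  assert (A2 : eps / 2 <= Rabs (h c)) by (apply Hlow; lra).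
  assert (A3 : Rabs (H (t + delta) - H t) < kappa * eps * delta / 2) by (apply HT1; lra).
  rewrite Heq in A3. rewrite Rabs_mult, (Rabs_right (t + delta - t)) in A3 by lra.
  replace (t + delta - t) with delta in A3 by ring.
  assert (kappa * (eps / 2) <= kappa * Rabs (h c)) by (apply Rmult_le_compat_l; lra).
  assert (kappa * eps * delta / 2 <= Rabs (dH c) * delta).
  { apply Rle_trans with (kappa * (eps/2) * delta). right; field.
    apply Rmult_le_compat_r; lra. }
  lra.
Qed.


Definition Vf Ss Es Is c (s e i : R) := Ss * phi (s / Ss) + Es * phi (e / Es) + c * Is * phi (i / Is).

Definition params_ok Lam b d a sg g Ss Es Is :=
  0 < a /\ 0 < sg /\ 0 < Ss /\ 0 < Is /\ 0 < b /\ 0 < d /\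
  Es = b * Ss * Is / a /\ g = sg * b * Ss / a /\ Lam = b * Ss * Is + d * Ss.

Definition asol Lam b d a sg g (S E I : R -> R) :=
  (forall t, 0 < t ->
     is_derive S t (fS' Lam b d (S t) (E t) (I t)) /\
     is_derive E t (fE' b a (S t) (E t) (I t)) /\
     is_derive I t (fI' sg g (S t) (E t) (I t))) /\
  filterlim S (at_right 0) (locally (S 0)) /\
  filterlim E (at_right 0) (locally (E 0)) /\
  filterlim I (at_right 0) (locally (I 0)).

Lemma params_Es Lam b d a sg g Ss Es Is : params_ok Lam b d a sg g Ss Es Is -> 0 < Es.
Proof. intros (?&?&?&?&?&?&->&_). pos. Qed.

Lemma V_deriv Lam b d a sg g Ss Es Is S E I t :
  params_ok Lam b d a sg g Ss Es Is -> asol Lam b d a sg g S E I ->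
  0 < t -> 0 < S t -> 0 < E t -> 0 < I t ->
  is_derive (fun t => Vf Ss Es Is (a / sg) (S t) (E t) (I t)) t
    (dV Lam b d a sg g Ss Es Is (S t) (E t) (I t)).
Proof.
  intros Hp Hs Ht HS HE HI. pose proof (params_Es _ _ _ _ _ _ _ _ _ Hp) as HEs.
  destruct Hp as (Ha&Hsg&HSs&HIs&Hb&Hd&_).
  destruct (proj1 Hs t Ht) as (DS&DE&DI).
  unfold Vf, phi. auto_derive.
  - repeat split; try (eexists; eassumption); pos.
  - replace (Derive (fun x => S x) t) with (fS' Lam b d (S t) (E t) (I t)) by (symmetry; apply is_derive_unique; exact DS).
    replace (Derive (fun x => E x) t) with (fE' b a (S t) (E t) (I t)) by (symmetry; apply is_derive_unique; exact DE).
    replace (Derive (fun x => I x) t) with (fI' sg g (S t) (E t) (I t)) by (symmetry; apply is_derive_unique; exact DI).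
    unfold dV. field. repeat split; neq.
Qed.

Lemma comp_rc (f h : R -> R) : filterlim f (at_right 0) (locally (f 0)) ->
  ex_derive h (f 0) -> filterlim (fun t => h (f t)) (at_right 0) (locally (h (f 0))).
Proof. intros Hf Hh. eapply filterlim_comp. exact Hf. apply (ex_derive_continuous h (f 0) Hh). Qed.

Lemma phi_term_derivable X Y x : 0 < X -> 0 < x -> ex_derive (fun y => Y * phi (y / X)) x.
Proof. intros. unfold phi. auto_derive. repeat split; pos. Qed.

Lemma V_rc Lam b d a sg g Ss Es Is S E I :
  params_ok Lam b d a sg g Ss Es Is -> asol Lam b d a sg g S E I ->
  0 < S 0 -> 0 < E 0 -> 0 < I 0 ->
  forall eps, 0 < eps -> exists delta, 0 < delta /\ forall s, 0 < s < delta ->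
    Rabs (Vf Ss Es Is (a / sg) (S s) (E s) (I s) - Vf Ss Es Is (a / sg) (S 0) (E 0) (I 0)) < eps.
Proof.
  intros Hp Hs HS HE HI eps Heps. pose proof (params_Es _ _ _ _ _ _ _ _ _ Hp) as HEs.
  destruct Hp as (Ha&Hsg&HSs&HIs&Hb&Hd&_).
  destruct Hs as (_&RS&RE&RI).
  pose proof (comp_rc S (fun y => Ss * phi (y / Ss)) RS (phi_term_derivable Ss Ss (S 0) HSs HS)) as C1.
  pose proof (comp_rc E (fun y => Es * phi (y / Es)) RE (phi_term_derivable Es Es (E 0) HEs HE)) as C2.
  pose proof (comp_rc I (fun y => a / sg * Is * phi (y / Is)) RI (phi_term_derivable Is (a / sg * Is) (I 0) HIs HI)) as C3.
  destruct (rc_eps _ 0 C1 (eps/3) ltac:(lra)) as [d1 [Hd1 D1]].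
  destruct (rc_eps _ 0 C2 (eps/3) ltac:(lra)) as [d2 [Hd2 D2]].
  destruct (rc_eps _ 0 C3 (eps/3) ltac:(lra)) as [d3 [Hd3 D3]].
  exists (Rmin d1 (Rmin d2 d3)). split.
  { apply Rmin_pos; auto. apply Rmin_pos; auto. }
  intros s Hs'.
  pose proof (Rmin_l d1 (Rmin d2 d3)). pose proof (Rmin_r d1 (Rmin d2 d3)).
  pose proof (Rmin_l d2 d3). pose proof (Rmin_r d2 d3).
  specialize (D1 s ltac:(lra)). specialize (D2 s ltac:(lra)). specialize (D3 s ltac:(lra)).
  simpl in D1, D2, D3. unfold Vf.
  match goal with |- Rabs ?X < _ => replace X with
    ((Ss * phi (S s / Ss) - Ss * phi (S 0 / Ss)) + (Es * phi (E s / Es) - Es * phi (E 0 / Es))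
     + (a / sg * Is * phi (I s / Is) - a / sg * Is * phi (I 0 / Is))) by ring end.
  eapply Rle_lt_trans. apply Rabs_triang. 
  eapply Rle_lt_trans. apply Rplus_le_compat_r. apply Rabs_triang. lra.
Qed.

Definition posP (S E I : R -> R) t := 0 < S t /\ 0 < E t /\ 0 < I t.

Lemma V_noninc Lam b d a sg g Ss Es Is S E I u v :
  params_ok Lam b d a sg g Ss Es Is -> asol Lam b d a sg g S E I ->
  0 < u <= v -> (forall t, u <= t <= v -> posP S E I t) ->
  Vf Ss Es Is (a / sg) (S v) (E v) (I v) <= Vf Ss Es Is (a / sg) (S u) (E u) (I u).
Proof.
  intros Hp Hs Huv HP.
  apply (mvt_noninc (fun t => Vf Ss Es Is (a / sg) (S t) (E t) (I t))
     (fun t => dV Lam b d a sg g Ss Es Is (S t) (E t) (I t))); [lra|].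
  intros t Ht. destruct (HP t Ht) as (P1&P2&P3). split.
  - apply V_deriv with (Lam := Lam); auto; lra.
  - destruct Hp as (Ha&Hsg&HSs&HIs&Hb&Hd&H1&H2&H3).
    destruct (dV_bound Lam b d a sg g Ss Es Is (S t) (E t) (I t)) as [B1 _]; auto.
    assert (0 <= d * (S t - Ss) ^ 2 / S t).
    { apply Rdiv_le_0_compat; auto. apply Rmult_le_pos; [lra|apply pow2_ge_0]. }
    lra.
Qed.

Lemma V_le0 Lam b d a sg g Ss Es Is S E I t :
  params_ok Lam b d a sg g Ss Es Is -> asol Lam b d a sg g S E I ->
  posP S E I 0 -> 0 < t -> (forall s, 0 < s <= t -> posP S E I s) ->
  Vf Ss Es Is (a / sg) (S t) (E t) (I t) <= Vf Ss Es Is (a / sg) (S 0) (E 0) (I 0).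
Proof.
  intros Hp Hs H0 Ht HP.
  destruct (Rle_lt_dec (Vf Ss Es Is (a / sg) (S t) (E t) (I t)) (Vf Ss Es Is (a / sg) (S 0) (E 0) (I 0))) as [|Hc]; auto.
  exfalso. destruct H0 as (P1&P2&P3).
  destruct (V_rc Lam b d a sg g Ss Es Is S E I Hp Hs P1 P2 P3 _ (proj2 (Rlt_0_minus _ _) Hc)) as [dl [Hdl D]].
  set (s := Rmin (dl / 2) t).
  assert (0 < s) by (apply Rmin_pos; lra).
  assert (s <= dl / 2) by apply Rmin_l. assert (s <= t) by apply Rmin_r.
  specialize (D s ltac:(lra)).
  assert (Vf Ss Es Is (a / sg) (S t) (E t) (I t) <= Vf Ss Es Is (a / sg) (S s) (E s) (I s)).
  { apply V_noninc with Lam b d g; auto. intros x Hx. apply HP; lra. }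
  pose proof (Rle_abs (Vf Ss Es Is (a / sg) (S s) (E s) (I s) - Vf Ss Es Is (a / sg) (S 0) (E 0) (I 0))).
  lra.
Qed.

Lemma box X Y K x : 0 < X -> 0 < Y -> 0 < x -> Y * phi (x / X) <= K ->
  X * exp (- (K / Y + 1)) <= x /\ x <= 2 * X * (K / Y + 2).
Proof.
  intros HX HY Hx HK.
  assert (Hu : 0 < x / X) by pos.
  assert (phi (x / X) <= K / Y).
  { apply Rmult_le_reg_l with Y; auto. replace (Y * (K / Y)) with K by (field; lra). lra. }
  split.
  - pose proof (phi_lnlow _ Hu).
    assert (- (K / Y + 1) <= ln (x / X)) by lra.
    assert (exp (- (K / Y + 1)) <= exp (ln (x / X))).
    { destruct H1 as [H1|H1]. left; apply exp_increasing; auto. rewrite H1; lra. }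
    rewrite exp_ln in H2 by auto.
    apply Rmult_le_reg_r with (/ X). pos.
    replace (x * / X) with (x / X) by reflexivity.
    replace (X * exp (- (K / Y + 1)) * / X) with (exp (- (K / Y + 1))) by (field; lra). lra.
  - pose proof (phi_high _ Hu).
    assert (x / X <= 2 * (K / Y + 2)) by lra.
    apply Rmult_le_reg_r with (/ X). pos.
    replace (x * / X) with (x / X) by reflexivity.
    replace (2 * X * (K / Y + 2) * / X) with (2 * (K / Y + 2)) by (field; lra). lra.
Qed.

Lemma V_split Ss Es Is c s e i : 0 < Ss -> 0 < Es -> 0 < Is -> 0 < c -> 0 < s -> 0 < e -> 0 < i ->
  Ss * phi (s / Ss) <= Vf Ss Es Is c s e i /\ Es * phi (e / Es) <= Vf Ss Es Is c s e i /\
  c * Is * phi (i / Is) <= Vf Ss Es Is c s e i.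
Proof.
  intros. unfold Vf.
  assert (0 <= Ss * phi (s / Ss)) by (apply Rmult_le_pos; [lra| apply phi_ge0; pos]).
  assert (0 <= Es * phi (e / Es)) by (apply Rmult_le_pos; [lra| apply phi_ge0; pos]).
  assert (0 <= c * Is * phi (i / Is)) by (apply Rmult_le_pos; [left; pos| apply phi_ge0; pos]).
  lra.
Qed.


Lemma cont_low (f : R -> R) tau m : 0 < tau -> ex_derive f tau ->
  (forall s, 0 < s < tau -> m <= f s) -> m <= f tau.
Proof.
  intros Ht Hd Hs. destruct (Rle_lt_dec m (f tau)) as [|Hc]; auto. exfalso.
  destruct (cont_eps f tau Hd (m - f tau) ltac:(lra)) as [dl [Hdl D]].
  set (s := Rmax (tau / 2) (tau - dl / 2)).
  assert (tau / 2 <= s) by apply Rmax_l. assert (tau - dl / 2 <= s) by apply Rmax_r.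
  assert (s < tau) by (unfold s; apply Rmax_lub_lt; lra).
  specialize (D s). assert (Rabs (s - tau) < dl) by (rewrite Rabs_left by lra; lra).
  specialize (D H2). specialize (Hs s ltac:(lra)).
  pose proof (Rle_abs (f s - f tau)). lra.
Qed.

Lemma cont_pos (f : R -> R) tau : ex_derive f tau -> 0 < f tau ->
  exists dl, 0 < dl /\ forall s, Rabs (s - tau) < dl -> 0 < f s.
Proof.
  intros Hd Hp. destruct (cont_eps f tau Hd (f tau) Hp) as [dl [Hdl D]].
  exists dl; split; auto. intros s Hs. specialize (D s Hs).
  apply Rabs_def2 in D. lra.
Qed.

Lemma positivity Lam b d a sg g Ss Es Is S E I :
  params_ok Lam b d a sg g Ss Es Is -> asol Lam b d a sg g S E I ->
  posP S E I 0 -> forall t, 0 <= t -> posP S E I t.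
Proof.
  intros Hp Hs H0.
  destruct (classic (forall t, 0 <= t -> posP S E I t)) as [|Hn]; auto. exfalso.
  apply not_all_ex_not in Hn. destruct Hn as [T HT].
  apply imply_to_and in HT. destruct HT as [HT0 HT].
  pose proof (params_Es _ _ _ _ _ _ _ _ _ Hp) as HEs.
  pose proof Hp as Hp'. destruct Hp' as (Ha&Hsg&HSs&HIs&Hb&Hd&_).
  assert (Hc : 0 < a / sg) by pos.
  set (K := Vf Ss Es Is (a / sg) (S 0) (E 0) (I 0)).
  set (Eset := fun t => 0 <= t /\ t <= T /\ forall s, 0 <= s <= t -> posP S E I s).
  destruct (completeness Eset) as [tau [Hub Hlub]].
  { exists T. intros x Hx. apply Hx. }
  { exists 0. split; [lra|split; [lra|]]. intros s Hs'. replace s with 0 by lra. auto. }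
  assert (Htau0 : 0 <= tau). { apply Hub. split; [lra|split; [lra|]]. intros s Hs'. replace s with 0 by lra. auto. }
  assert (HtauT : tau <= T). { apply Hlub. intros x Hx. apply Hx. }
  assert (F1 : forall s, 0 <= s < tau -> posP S E I s).
  { intros s Hs'. destruct (classic (posP S E I s)) as [|Hn]; auto. exfalso.
    assert (tau <= s); [|lra]. apply Hlub. intros x Hx.
    destruct (Rle_lt_dec x s); auto. exfalso. apply Hn. apply Hx. lra. }
  pose proof Hs as Hsol. destruct Hs as (Hder & RS & RE & RI).
  assert (F2 : 0 < tau).
  { destruct H0 as (P1&P2&P3).
    destruct (rc_eps S 0 RS (S 0) P1) as [d1 [Hd1 D1]].
    destruct (rc_eps E 0 RE (E 0) P2) as [d2 [Hd2 D2]].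
    destruct (rc_eps I 0 RI (I 0) P3) as [d3 [Hd3 D3]].
    assert (T <> 0). { intro; subst T. apply HT. split; auto. }
    set (t1 := Rmin (Rmin d1 (Rmin d2 d3) / 2) T).
    assert (0 < Rmin d1 (Rmin d2 d3)) by (repeat apply Rmin_pos; auto).
    assert (0 < t1) by (apply Rmin_pos; lra).
    assert (t1 <= Rmin d1 (Rmin d2 d3) / 2) by apply Rmin_l. assert (t1 <= T) by apply Rmin_r.
    pose proof (Rmin_l d1 (Rmin d2 d3)). pose proof (Rmin_r d1 (Rmin d2 d3)).
    pose proof (Rmin_l d2 d3). pose proof (Rmin_r d2 d3).
    assert (t1 <= tau); [|lra]. apply Hub. split; [lra|split; [lra|]].
    intros s Hs'. destruct (Req_dec s 0) as [->|Hs0]. split; auto.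
    specialize (D1 s ltac:(lra)). specialize (D2 s ltac:(lra)). specialize (D3 s ltac:(lra)).
    pose proof (Rle_abs (S 0 - S s)). pose proof (Rle_abs (E 0 - E s)). pose proof (Rle_abs (I 0 - I s)).
    rewrite Rabs_minus_sym in D1, D2, D3.
    split; [lra|split; lra]. }
  assert (F3 : forall s, 0 < s < tau ->
     Ss * exp (- (K / Ss + 1)) <= S s /\ Es * exp (- (K / Es + 1)) <= E s /\
     Is * exp (- (K / (a / sg * Is) + 1)) <= I s).
  { intros s Hs'. 
    assert (HV : Vf Ss Es Is (a / sg) (S s) (E s) (I s) <= K).
    { apply (V_le0 Lam b d a sg g Ss Es Is S E I s Hp Hsol H0); [lra|]. intros x Hx. apply F1; lra. }
    destruct (F1 s ltac:(lra)) as (P1&P2&P3).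
    destruct (V_split Ss Es Is (a / sg) (S s) (E s) (I s)) as (V1&V2&V3); auto.
    split; [|split].
    - apply (box Ss Ss K (S s)); auto. lra.
    - apply (box Es Es K (E s)); auto. lra.
    - apply (box Is (a / sg * Is) K (I s)); auto. pos. lra. }
  destruct (Hder tau F2) as (DS & DE & DI).
  assert (XS : ex_derive S tau) by (eexists; eauto).
  assert (XE : ex_derive E tau) by (eexists; eauto).
  assert (XI : ex_derive I tau) by (eexists; eauto).
  assert (F4S : 0 < S tau).
  { eapply Rlt_le_trans; [|apply (cont_low S tau _ F2 XS)]. 2: intros s Hs'; apply (F3 s Hs'). pos. apply exp_pos. }
  assert (F4E : 0 < E tau).
  { eapply Rlt_le_trans; [|apply (cont_low E tau _ F2 XE)]. 2: intros s Hs'; apply (F3 s Hs'). pos. apply exp_pos. }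
  assert (F4I : 0 < I tau).
  { eapply Rlt_le_trans; [|apply (cont_low I tau _ F2 XI)]. 2: intros s Hs'; apply (F3 s Hs'). pos. apply exp_pos. }
  destruct (cont_pos S tau XS F4S) as [e1 [He1 G1]].
  destruct (cont_pos E tau XE F4E) as [e2 [He2 G2]].
  destruct (cont_pos I tau XI F4I) as [e3 [He3 G3]].
  pose proof (Rmin_l e1 (Rmin e2 e3)). pose proof (Rmin_r e1 (Rmin e2 e3)).
  pose proof (Rmin_l e2 e3). pose proof (Rmin_r e2 e3).
  set (dl := Rmin e1 (Rmin e2 e3)) in *.
  assert (0 < dl) by (repeat apply Rmin_pos; auto).
  set (t' := Rmin (tau + dl / 2) T).
  assert (t' <= tau + dl / 2) by apply Rmin_l. assert (t' <= T) by apply Rmin_r.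
  assert (Ht' : forall s, 0 <= s <= t' -> posP S E I s).
  { intros s Hs'. destruct (Rlt_le_dec s tau). apply F1; lra.
    assert (Rabs (s - tau) < dl) by (rewrite Rabs_right by lra; lra).
    split; [apply G1|split; [apply G2|apply G3]]; lra. }
  assert (0 <= t') by (unfold t'; apply Rmin_glb; lra).
  assert (t' <= tau) by (apply Hub; unfold Eset; split; [lra|split; auto]).
  destruct (Rle_lt_dec (tau + dl / 2) T) as [Hm|Hm].
  - unfold t' in *. rewrite Rmin_left in * by lra. lra.
  - apply HT. apply Ht'. unfold t'. rewrite Rmin_right by lra. lra.
Qed.


Lemma noninc_cauchy (f : R -> R) :
  (forall s t, 0 < s <= t -> f t <= f s) -> (forall t, 0 < t -> 0 <= f t) ->
  forall eta, 0 < eta -> exists T, forall t s, T <= t -> T <= s -> Rabs (f t - f s) < eta.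
Proof.
  intros Hm Hb eta He.
  set (A := fun y => exists t, 0 < t /\ y = - f t).
  destruct (completeness A) as [m [Hub Hlub]].
  { exists 0. intros y [t [Ht ->]]. specialize (Hb t Ht). lra. }
  { exists (- f 1). exists 1. split; auto; lra. }
  destruct (classic (exists t, 0 < t /\ m - eta < - f t)) as [[t0 [Ht0 Hf0]]|Hn].
  - exists t0. intros t s Ht Hs.
    assert (- f t <= m) by (apply Hub; exists t; split; auto; lra).
    assert (- f s <= m) by (apply Hub; exists s; split; auto; lra).
    assert (f t <= f t0) by (apply Hm; lra).
    assert (f s <= f t0) by (apply Hm; lra).
    apply Rabs_def1; lra.
  - exfalso. assert (m <= m - eta); [|lra]. apply Hlub. intros y [t [Ht ->]].
    destruct (Rle_lt_dec (- f t) (m - eta)); auto. exfalso. apply Hn. exists t. auto.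
Qed.

Lemma sq_lt x e : 0 < e -> (x ^ 2) < e ^ 2 -> Rabs x < e.
Proof. intros He H. rewrite <- pow2_abs in H. pose proof (Rabs_pos x).
  destruct (Rlt_le_dec (Rabs x) e); auto. nra. Qed.

Lemma abs_mul_le x y X Y : Rabs x <= X -> Rabs y <= Y -> Rabs (x * y) <= X * Y.
Proof. intros. rewrite Rabs_mult. apply Rmult_le_compat; auto; apply Rabs_pos. Qed.
Lemma abs_add_le x y X Y : Rabs x <= X -> Rabs y <= Y -> Rabs (x + y) <= X + Y.
Proof. intros. eapply Rle_trans. apply Rabs_triang. lra. Qed.
Lemma abs_sub_le x y X Y : Rabs x <= X -> Rabs y <= Y -> Rabs (x - y) <= X + Y.
Proof. intros. eapply Rle_trans. apply Rabs_triang. rewrite Rabs_Ropp. lra. Qed.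
Lemma abs_opp_le x X : Rabs x <= X -> Rabs (- x) <= X.
Proof. intros. rewrite Rabs_Ropp. auto. Qed.

Ltac bnd := first [ apply abs_mul_le; bnd | apply abs_add_le; bnd | apply abs_sub_le; bnd
  | apply abs_opp_le; bnd | eassumption | apply Rle_refl ].

Lemma Deq (f : R -> R) t l : is_derive f t l -> Derive (fun x => f x) t = l.
Proof. intros H. apply is_derive_unique. exact H. Qed.

Ltac dtac DS DE DI :=
  unfold fS', fE', fI'; auto_derive; [repeat split; try (eexists; eassumption) |
   try rewrite (Deq _ _ _ DS); try rewrite (Deq _ _ _ DE); try rewrite (Deq _ _ _ DI);
   unfold fS', fE', fI'; ring].

Lemma convergence Lam b d a sg g Ss Es Is S E I :
  params_ok Lam b d a sg g Ss Es Is -> asol Lam b d a sg g S E I -> posP S E I 0 ->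
  (forall eps, 0 < eps -> exists T, forall t, T <= t -> Rabs (S t - Ss) < eps) /\
  (forall eps, 0 < eps -> exists T, forall t, T <= t -> Rabs (E t - Es) < eps) /\
  (forall eps, 0 < eps -> exists T, forall t, T <= t -> Rabs (I t - Is) < eps).
Proof.
  intros Hp Hsol H0.
  pose proof (params_Es _ _ _ _ _ _ _ _ _ Hp) as HEs.
  pose proof Hp as Hp'. destruct Hp' as (Ha&Hsg&HSs&HIs&Hb&Hd&HE&Hg&HL).
  assert (Hc : 0 < a / sg) by pos.
  pose proof (positivity _ _ _ _ _ _ _ _ _ _ _ _ Hp Hsol H0) as HP.
  set (V := fun t => Vf Ss Es Is (a / sg) (S t) (E t) (I t)).
  set (K := V 0).
  assert (HV : forall t, 0 <= t -> V t <= K).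
  { intros t Ht. destruct (Req_dec t 0) as [->|Hn]; [unfold K; lra|].
    apply (V_le0 Lam b d a sg g Ss Es Is S E I t Hp Hsol H0); [lra|]. intros s Hs. apply HP; lra. }
  set (M := 2 * Ss * (K / Ss + 2) + 2 * Es * (K / Es + 2) + 2 * Is * (K / (a / sg * Is) + 2)).
  set (mS := Ss * exp (- (K / Ss + 1))).
  assert (HmS : 0 < mS) by (unfold mS; pos; apply exp_pos).
  assert (HB : forall t, 0 <= t -> (0 < S t <= M /\ 0 < E t <= M /\ 0 < I t <= M) /\ mS <= S t).
  { intros t Ht. destruct (HP t Ht) as (P1&P2&P3). specialize (HV t Ht). unfold V in HV.
    destruct (V_split Ss Es Is (a / sg) (S t) (E t) (I t)) as (V1&V2&V3); auto.
    destruct (box Ss Ss K (S t)) as [B1 B2]; auto. lra.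
    destruct (box Es Es K (E t)) as [B3 B4]; auto. lra.
    destruct (box Is (a / sg * Is) K (I t)) as [B5 B6]; auto. pos. lra.
    unfold M, mS. repeat split; lra. }
  assert (HM : 0 < M). { destruct (HB 0 ltac:(lra)) as ((A1&_)&_). lra. }
  assert (HA : forall t, 0 <= t -> Rabs (S t) <= M /\ Rabs (E t) <= M /\ Rabs (I t) <= M).
  { intros t Ht. destruct (HB t Ht) as ((A1&A2&A3)&_).
    rewrite !Rabs_right by lra. lra. }
  assert (Vmon : forall s t, 0 < s <= t -> V t <= V s).
  { intros s t Hst. apply (V_noninc Lam b d a sg g Ss Es Is S E I s t Hp Hsol Hst).
    intros x Hx; apply HP; lra. }
  assert (Vpos : forall t, 0 < t -> 0 <= V t).
  { intros t Ht. destruct (HP t ltac:(lra)) as (P1&P2&P3).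
    destruct (V_split Ss Es Is (a / sg) (S t) (E t) (I t)) as (V1&V2&V3); auto.
    assert (0 <= Ss * phi (S t / Ss)) by (apply Rmult_le_pos; [lra|apply phi_ge0; pos]).
    unfold V. lra. }
  pose proof (noninc_cauchy V Vmon Vpos) as VC.
  assert (DVt : forall t, 0 < t -> is_derive V t (dV Lam b d a sg g Ss Es Is (S t) (E t) (I t))
      /\ dV Lam b d a sg g Ss Es Is (S t) (E t) (I t) <= 0
      /\ d * (S t - Ss) ^ 2 / S t <= - dV Lam b d a sg g Ss Es Is (S t) (E t) (I t)
      /\ b * Ss * Is * ((E t * Is - Es * I t) ^ 2 / (2 * (Es * I t) * (E t * Is + Es * I t)))
          <= - dV Lam b d a sg g Ss Es Is (S t) (E t) (I t)).
  { intros t Ht. destruct (HP t ltac:(lra)) as (P1&P2&P3).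
    destruct (dV_bound Lam b d a sg g Ss Es Is (S t) (E t) (I t)) as [B1 B2]; auto.
    split. apply (V_deriv Lam b d a sg g Ss Es Is S E I t); auto.
    assert (0 <= d * (S t - Ss) ^ 2 / S t).
    { apply Rdiv_le_0_compat; auto. apply Rmult_le_pos; [lra|apply pow2_ge_0]. }
    repeat split; auto; lra. }
  assert (C1 : forall eps, 0 < eps -> exists T, forall t, T <= t -> Rabs ((S t - Ss) ^ 2) < eps).
  { eapply (barbalat V (fun t => dV Lam b d a sg g Ss Es Is (S t) (E t) (I t))
      (fun t => (S t - Ss) ^ 2) (fun t => 2 * (S t - Ss) * fS' Lam b d (S t) (E t) (I t)) 0 (d / M)).
    - pos.
    - intros t Ht. destruct (DVt t Ht) as (D1&D2&D3&D4). split; auto.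
      destruct (HB t ltac:(lra)) as ((A1&A2&A3)&_).
      rewrite (Rabs_right ((S t - Ss) ^ 2)) by (apply Rle_ge, pow2_ge_0).
      rewrite (Rabs_left1 _ D2).
      eapply Rle_trans; [|exact D3].
      replace (d / M * (S t - Ss) ^ 2) with (d * (S t - Ss) ^ 2 * / M) by (field; lra).
      unfold Rdiv. apply Rmult_le_compat_l. apply Rmult_le_pos; [lra|apply pow2_ge_0].
      apply Rinv_le_contravar; lra.
    - intros t Ht. destruct (proj1 Hsol t Ht) as (DS&DE&DI).
      destruct (HA t ltac:(lra)) as (AS&AE&AI). split.
      + dtac DS DE DI.
      + unfold fS'. bnd.
    - exact VC. }
  assert (C1' : forall eps, 0 < eps -> exists T, forall t, T <= t -> Rabs (S t - Ss) < eps).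
  { intros eps He. destruct (C1 (eps ^ 2) ltac:(pos)) as [T HT]. exists T. intros t Ht.
    apply sq_lt; auto. specialize (HT t Ht). rewrite Rabs_right in HT by (apply Rle_ge, pow2_ge_0). auto. }
  assert (C2 : forall eps, 0 < eps -> exists T, forall t, T <= t -> Rabs ((E t * Is - Es * I t) ^ 2) < eps).
  { eapply (barbalat V (fun t => dV Lam b d a sg g Ss Es Is (S t) (E t) (I t))
      (fun t => (E t * Is - Es * I t) ^ 2)
      (fun t => 2 * (E t * Is - Es * I t) * (fE' b a (S t) (E t) (I t) * Is - Es * fI' sg g (S t) (E t) (I t)))
      0 (b * Ss * Is / (2 * (Es * M) * (M * Is + Es * M)))).
    - pos. apply Rplus_lt_0_compat; pos.
    - intros t Ht. destruct (DVt t Ht) as (D1&D2&D3&D4). split; auto.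
      destruct (HB t ltac:(lra)) as ((A1&A2&A3)&_).
      rewrite (Rabs_right ((E t * Is - Es * I t) ^ 2)) by (apply Rle_ge, pow2_ge_0).
      rewrite (Rabs_left1 _ D2).
      eapply Rle_trans; [|exact D4].
      set (q := (E t * Is - Es * I t) ^ 2).
      assert (Hq : 0 <= q) by apply pow2_ge_0.
      assert (Hd1 : 0 < 2 * (Es * I t) * (E t * Is + Es * I t)) by (pos; apply Rplus_lt_0_compat; pos).
      assert (Hd12 : 2 * (Es * I t) * (E t * Is + Es * I t) <= 2 * (Es * M) * (M * Is + Es * M)).
      { apply Rmult_le_compat. left; pos. apply Rplus_le_le_0_compat; left; pos.
        apply Rmult_le_compat_l; [lra|]. apply Rmult_le_compat_l; lra.
        apply Rplus_le_compat. apply Rmult_le_compat_r; lra. apply Rmult_le_compat_l; lra. }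
      replace (b * Ss * Is / (2 * (Es * M) * (M * Is + Es * M)) * q)
        with (b * Ss * Is * (q * / (2 * (Es * M) * (M * Is + Es * M)))) by (assert (0 < M * Is + Es * M) by (apply Rplus_lt_0_compat; pos); field; repeat split; lra).
      apply Rmult_le_compat_l. left; pos.
      unfold Rdiv. apply Rmult_le_compat_l; auto. apply Rinv_le_contravar; auto.
    - intros t Ht. destruct (proj1 Hsol t Ht) as (DS&DE&DI).
      destruct (HA t ltac:(lra)) as (AS&AE&AI). split.
      + dtac DS DE DI.
      + unfold fE', fI'. bnd.
    - exact VC. }
  assert (C2' : forall eps, 0 < eps -> exists T, forall t, T <= t -> Rabs (E t * Is - Es * I t) < eps).
  { intros eps He. destruct (C2 (eps ^ 2) ltac:(pos)) as [T HT]. exists T. intros t Ht.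
    apply sq_lt; auto. specialize (HT t Ht). rewrite Rabs_right in HT by (apply Rle_ge, pow2_ge_0). auto. }
  assert (C3 : forall eps, 0 < eps -> exists T, forall t, T <= t -> Rabs (fS' Lam b d (S t) (E t) (I t)) < eps).
  { eapply (barbalat S (fun t => fS' Lam b d (S t) (E t) (I t)) (fun t => fS' Lam b d (S t) (E t) (I t))
      (fun t => - (b * (fS' Lam b d (S t) (E t) (I t) * I t + S t * fI' sg g (S t) (E t) (I t))) - d * fS' Lam b d (S t) (E t) (I t))
      0 1).
    - lra.
    - intros t Ht. destruct (proj1 Hsol t Ht) as (DS&DE&DI). split; auto. lra.
    - intros t Ht. destruct (proj1 Hsol t Ht) as (DS&DE&DI).
      destruct (HA t ltac:(lra)) as (AS&AE&AI). split.
      + dtac DS DE DI.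
      + unfold fS', fI'. bnd.
    - intros eta He. destruct (C1' (eta / 2) ltac:(lra)) as [T HT]. exists T. intros t s Ht Hs.
      specialize (HT t Ht) as X1. specialize (HT s Hs) as X2.
      apply Rabs_def2 in X1. apply Rabs_def2 in X2. apply Rabs_def1; lra. }
  assert (CI : forall eps, 0 < eps -> exists T, forall t, T <= t -> Rabs (I t - Is) < eps).
  { intros eps He.
    set (e1 := eps * b * mS / (2 * (d + b * Is + 1))).
    assert (HbI : 0 < b * Is) by pos.
    assert (He1 : 0 < e1) by (unfold e1; apply Rdiv_lt_0_compat; [apply Rmult_lt_0_compat; [apply Rmult_lt_0_compat|]|]; lra).
    destruct (C1' e1 He1) as [T1 HT1]. destruct (C3 e1 He1) as [T3 HT3].
    exists (Rmax (Rmax T1 T3) 0). intros t Ht.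
    pose proof (Rmax_l (Rmax T1 T3) 0). pose proof (Rmax_r (Rmax T1 T3) 0).
    pose proof (Rmax_l T1 T3). pose proof (Rmax_r T1 T3).
    specialize (HT1 t ltac:(lra)). specialize (HT3 t ltac:(lra)).
    destruct (HB t ltac:(lra)) as ((A1&A2&A3)&A4).
    assert (Heq : b * S t * (I t - Is) = - (d + b * Is) * (S t - Ss) - fS' Lam b d (S t) (E t) (I t)).
    { unfold fS'. rewrite HL. ring. }
    assert (Hab : Rabs (b * S t * (I t - Is)) <= (d + b * Is) * e1 + e1).
    { rewrite Heq. eapply Rle_trans. apply Rabs_triang. rewrite Rabs_Ropp, Rabs_mult, Rabs_Ropp.
      rewrite (Rabs_right (d + b * Is)) by lra.
      apply Rplus_le_compat; [|lra]. apply Rmult_le_compat_l; lra. }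
    rewrite Rabs_mult, (Rabs_right (b * S t)) in Hab by (left; pos).
    assert ((d + b * Is) * e1 + e1 < eps * b * mS).
    { unfold e1. apply Rminus_lt_0.
      replace (eps * b * mS - ((d + b * Is) * (eps * b * mS / (2 * (d + b * Is + 1))) + eps * b * mS / (2 * (d + b * Is + 1))))
        with (eps * b * mS / 2) by (field; lra).
      assert (0 < eps * b * mS) by (apply Rmult_lt_0_compat; [apply Rmult_lt_0_compat|]; lra). lra. }
    assert (b * mS * Rabs (I t - Is) <= b * S t * Rabs (I t - Is)).
    { apply Rmult_le_compat_r. apply Rabs_pos. apply Rmult_le_compat_l; lra. }
    assert (b * mS * Rabs (I t - Is) < b * mS * eps) by lra.
    apply Rmult_lt_reg_l with (b * mS). apply Rmult_lt_0_compat; lra. lra. }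
  assert (CE : forall eps, 0 < eps -> exists T, forall t, T <= t -> Rabs (E t - Es) < eps).
  { intros eps He.
    destruct (C2' (eps * Is / 2) ltac:(pos)) as [T2 HT2].
    destruct (CI (eps * Is / (2 * Es)) ltac:(pos)) as [T4 HT4].
    exists (Rmax T2 T4). intros t Ht.
    pose proof (Rmax_l T2 T4). pose proof (Rmax_r T2 T4).
    specialize (HT2 t ltac:(lra)). specialize (HT4 t ltac:(lra)).
    assert (Heq : E t - Es = (E t * Is - Es * I t) / Is + Es / Is * (I t - Is)) by (field; lra).
    rewrite Heq. eapply Rle_lt_trans. apply Rabs_triang.
    unfold Rdiv. rewrite !Rabs_mult, Rabs_Rinv by lra. rewrite (Rabs_right Is), (Rabs_right Es) by lra.
    assert (Rabs (E t * Is - Es * I t) * / Is < eps / 2).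
    { apply Rmult_lt_reg_r with Is; auto. rewrite Rmult_assoc, Rinv_l by lra. lra. }
    assert (Es * / Is * Rabs (I t - Is) < eps / 2).
    { apply Rmult_lt_reg_r with (Is / Es). pos.
      replace (Es * / Is * Rabs (I t - Is) * (Is / Es)) with (Rabs (I t - Is)) by (field; lra).
      replace (eps / 2 * (Is / Es)) with (eps * Is / (2 * Es)) by (field; lra). auto. }
    lra. }
  auto.
Qed.


Definition dist3' (a1 a2 a3 b1 b2 b3 : R) : R :=
  sqrt ((a1 - b1) ^ 2 + (a2 - b2) ^ 2 + (a3 - b3) ^ 2).

Lemma dist_ge1 a1 a2 a3 b1 b2 b3 : Rabs (a1 - b1) <= dist3' a1 a2 a3 b1 b2 b3.
Proof. unfold dist3'. rewrite <- (sqrt_pow2 (Rabs (a1 - b1))) by apply Rabs_pos. rewrite pow2_abs.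
  apply sqrt_le_1_alt. pose proof (pow2_ge_0 (a2 - b2)). pose proof (pow2_ge_0 (a3 - b3)). lra. Qed.
Lemma dist_ge2 a1 a2 a3 b1 b2 b3 : Rabs (a2 - b2) <= dist3' a1 a2 a3 b1 b2 b3.
Proof. unfold dist3'. rewrite <- (sqrt_pow2 (Rabs (a2 - b2))) by apply Rabs_pos. rewrite pow2_abs.
  apply sqrt_le_1_alt. pose proof (pow2_ge_0 (a1 - b1)). pose proof (pow2_ge_0 (a3 - b3)). lra. Qed.
Lemma dist_ge3 a1 a2 a3 b1 b2 b3 : Rabs (a3 - b3) <= dist3' a1 a2 a3 b1 b2 b3.
Proof. unfold dist3'. rewrite <- (sqrt_pow2 (Rabs (a3 - b3))) by apply Rabs_pos. rewrite pow2_abs.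
  apply sqrt_le_1_alt. pose proof (pow2_ge_0 (a2 - b2)). pose proof (pow2_ge_0 (a1 - b1)). lra. Qed.
Lemma dist_le a1 a2 a3 b1 b2 b3 :
  dist3' a1 a2 a3 b1 b2 b3 <= Rabs (a1 - b1) + Rabs (a2 - b2) + Rabs (a3 - b3).
Proof. unfold dist3'.
  pose proof (Rabs_pos (a1 - b1)). pose proof (Rabs_pos (a2 - b2)). pose proof (Rabs_pos (a3 - b3)).
  rewrite <- (sqrt_pow2 (Rabs (a1 - b1) + Rabs (a2 - b2) + Rabs (a3 - b3))) by lra.
  apply sqrt_le_1_alt. rewrite <- (pow2_abs (a1 - b1)), <- (pow2_abs (a2 - b2)), <- (pow2_abs (a3 - b3)).
  nra. Qed.

Lemma phi_small X x dl : 0 < X -> 0 < dl -> dl <= X / 2 -> Rabs (x - X) < dl ->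
  X * phi (x / X) <= 2 * dl ^ 2 / X.
Proof.
  intros HX Hd Hdl Hx. apply Rabs_def2 in Hx.
  assert (Hu : 0 < x / X) by (apply Rdiv_lt_0_compat; lra).
  pose proof (phi_le _ Hu).
  assert (1 / 2 <= x / X).
  { apply Rmult_le_reg_r with X; auto. replace (x / X * X) with x by (field; lra). lra. }
  assert ((x / X - 1) ^ 2 / (x / X) <= 2 * (x / X - 1) ^ 2).
  { apply Rmult_le_reg_r with (x / X); auto.
    replace ((x / X - 1) ^ 2 / (x / X) * (x / X)) with ((x / X - 1) ^ 2) by (field; lra).
    pose proof (pow2_ge_0 (x / X - 1)). nra. }
  assert (x / X - 1 = (x - X) / X) by (field; lra).
  rewrite H2 in H, H1.
  assert (((x - X) / X) ^ 2 = (x - X) ^ 2 / X ^ 2) by (field; lra). rewrite H3 in H, H1.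
  assert ((x - X) ^ 2 <= dl ^ 2) by (rewrite <- pow2_abs; apply pow_incr; split; [apply Rabs_pos| left; apply Rabs_def1; lra]).
  assert (X * phi (x / X) <= X * (2 * ((x - X) ^ 2 / X ^ 2))) by (apply Rmult_le_compat_l; lra).
  eapply Rle_trans; [exact H5|].
  replace (X * (2 * ((x - X) ^ 2 / X ^ 2))) with (2 * (x - X) ^ 2 / X) by (field; lra).
  unfold Rdiv. apply Rmult_le_compat_r. left; apply Rinv_0_lt_compat; lra. lra.
Qed.

Lemma near_from_phi X Y x r : 0 < X -> 0 < Y -> 0 < x -> 0 < r <= 1 ->
  Y * phi (x / X) < Y * r ^ 2 / 9 -> Rabs (x - X) < r * X.
Proof.
  intros HX HY Hx Hr Hp.
  assert (Hu : 0 < x / X) by (apply Rdiv_lt_0_compat; lra).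
  destruct (Rlt_le_dec (Rabs (x / X - 1)) r) as [Hl|Hl].
  - replace (x - X) with ((x / X - 1) * X) by (field; lra).
    rewrite Rabs_mult, (Rabs_right X) by lra. apply Rmult_lt_compat_r; auto.
  - exfalso. pose proof (phi_far _ _ Hu Hr Hl).
    assert (Y * (r ^ 2 / 9) <= Y * phi (x / X)) by (apply Rmult_le_compat_l; lra).
    replace (Y * r ^ 2 / 9) with (Y * (r ^ 2 / 9)) in Hp by (field). lra.
Qed.

Lemma stability Lam b d a sg g Ss Es Is :
  params_ok Lam b d a sg g Ss Es Is ->
  forall eps, 0 < eps -> exists delta, 0 < delta /\ forall S E I,
    asol Lam b d a sg g S E I -> posP S E I 0 ->
    dist3' (S 0) (E 0) (I 0) Ss Es Is < delta ->
    forall t, 0 <= t -> dist3' (S t) (E t) (I t) Ss Es Is < eps.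
Proof.
  intros Hp eps Heps.
  pose proof (params_Es _ _ _ _ _ _ _ _ _ Hp) as HEs.
  pose proof Hp as Hp'. destruct Hp' as (Ha&Hsg&HSs&HIs&Hb&Hd&HE&Hg&HL).
  assert (Hc : 0 < a / sg) by pos.
  set (c := a / sg) in *.
  set (sum := Ss + Es + Is).
  set (r := Rmin 1 (eps / (sum + 1))).
  assert (Hr : 0 < r <= 1).
  { split. apply Rmin_pos. lra. apply Rdiv_lt_0_compat; unfold sum; lra. apply Rmin_l. }
  assert (Hrs : r * sum < eps).
  { assert (r <= eps / (sum + 1)) by apply Rmin_r.
    assert (r * sum <= eps / (sum + 1) * sum) by (apply Rmult_le_compat_r; [unfold sum; lra | auto]).
    assert (eps / (sum + 1) * sum < eps).
    { apply Rmult_lt_reg_r with (sum + 1). unfold sum; lra.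
      replace (eps / (sum + 1) * sum * (sum + 1)) with (eps * sum) by (field; unfold sum; lra).
      nra. }
    lra. }
  set (Y := Rmin Ss (Rmin Es (c * Is))).
  assert (HY : 0 < Y) by (unfold Y; repeat apply Rmin_pos; pos).
  assert (HY1 : Y <= Ss) by apply Rmin_l.
  assert (HY2 : Y <= Es) by (unfold Y; eapply Rle_trans; [apply Rmin_r|apply Rmin_l]).
  assert (HY3 : Y <= c * Is) by (unfold Y; eapply Rle_trans; [apply Rmin_r|apply Rmin_r]).
  set (eta := Y * r ^ 2 / 9).
  assert (Heta : 0 < eta) by (unfold eta; pos).
  set (K' := 1 / Ss + 1 / Es + c / Is).
  assert (HK' : 0 < K') by (unfold K'; assert (0 < 1 / Ss) by pos; assert (0 < 1/Es) by pos; assert (0 < c / Is) by pos; lra).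
  set (m3 := Rmin Ss (Rmin Es Is)).
  assert (Hm3 : 0 < m3) by (unfold m3; repeat apply Rmin_pos; auto).
  assert (Hm31 : m3 <= Ss) by apply Rmin_l.
  assert (Hm32 : m3 <= Es) by (unfold m3; eapply Rle_trans; [apply Rmin_r|apply Rmin_l]).
  assert (Hm33 : m3 <= Is) by (unfold m3; eapply Rle_trans; [apply Rmin_r|apply Rmin_r]).
  set (delta := Rmin (Rmin 1 (eta / (2 * K' + 1))) (m3 / 2)).
  assert (Hdl : 0 < delta).
  { unfold delta. repeat apply Rmin_pos; try lra. apply Rdiv_lt_0_compat; lra. }
  assert (Hd1 : delta <= 1) by (unfold delta; eapply Rle_trans; [apply Rmin_l|apply Rmin_l]).
  assert (Hd2 : delta <= eta / (2 * K' + 1)) by (unfold delta; eapply Rle_trans; [apply Rmin_l|apply Rmin_r]).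
  assert (Hd3 : delta <= m3 / 2) by (unfold delta; apply Rmin_r).
  exists delta. split; auto.
  intros S E I Hsol H0 Hdist t Ht.
  pose proof (dist_ge1 (S 0) (E 0) (I 0) Ss Es Is) as G1.
  pose proof (dist_ge2 (S 0) (E 0) (I 0) Ss Es Is) as G2.
  pose proof (dist_ge3 (S 0) (E 0) (I 0) Ss Es Is) as G3.
  assert (HV0 : Vf Ss Es Is c (S 0) (E 0) (I 0) < eta).
  { unfold Vf.
    pose proof (phi_small Ss (S 0) delta HSs Hdl ltac:(lra) ltac:(lra)) as Q1.
    pose proof (phi_small Es (E 0) delta HEs Hdl ltac:(lra) ltac:(lra)) as Q2.
    pose proof (phi_small Is (I 0) delta HIs Hdl ltac:(lra) ltac:(lra)) as Q3.
    assert (c * Is * phi (I 0 / Is) <= c * (2 * delta ^ 2 / Is)).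
    { rewrite Rmult_assoc. apply Rmult_le_compat_l; lra. }
    assert (2 * delta ^ 2 / Ss + 2 * delta ^ 2 / Es + c * (2 * delta ^ 2 / Is) = 2 * delta ^ 2 * K')
      by (unfold K'; field; lra).
    assert (2 * delta ^ 2 * K' <= 2 * delta * K').
    { assert (delta ^ 2 <= delta) by nra. nra. }
    assert (2 * delta * K' < eta).
    { assert (delta * (2 * K' + 1) <= eta).
      { apply Rmult_le_reg_r with (/ (2 * K' + 1)). apply Rinv_0_lt_compat; lra.
        replace (delta * (2 * K' + 1) * / (2 * K' + 1)) with delta by (field; lra). exact Hd2. }
      nra. }
    lra. }
  assert (HVt : Vf Ss Es Is c (S t) (E t) (I t) < eta).
  { destruct (Req_dec t 0) as [->|Hn]; auto.
    eapply Rle_lt_trans; [|exact HV0].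
    apply (V_le0 Lam b d a sg g Ss Es Is S E I t Hp Hsol H0); [lra|].
    intros s Hs. apply (positivity _ _ _ _ _ _ _ _ _ _ _ _ Hp Hsol H0); lra. }
  destruct (positivity _ _ _ _ _ _ _ _ _ _ _ _ Hp Hsol H0 t Ht) as (P1&P2&P3).
  destruct (V_split Ss Es Is c (S t) (E t) (I t)) as (V1&V2&V3); auto.
  assert (N1 : Rabs (S t - Ss) < r * Ss).
  { apply (near_from_phi Ss Ss); auto.
    assert (Ss * r ^ 2 / 9 >= eta); [|lra]. unfold eta.
    apply Rle_ge. unfold Rdiv. apply Rmult_le_compat_r. lra. apply Rmult_le_compat_r. apply pow2_ge_0. lra. }
  assert (N2 : Rabs (E t - Es) < r * Es).
  { apply (near_from_phi Es Es); auto.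
    assert (Es * r ^ 2 / 9 >= eta); [|lra]. unfold eta.
    apply Rle_ge. unfold Rdiv. apply Rmult_le_compat_r. lra. apply Rmult_le_compat_r. apply pow2_ge_0. lra. }
  assert (N3 : Rabs (I t - Is) < r * Is).
  { apply (near_from_phi Is (c * Is)); auto. pos.
    assert (c * Is * r ^ 2 / 9 >= eta); [|lra]. unfold eta.
    apply Rle_ge. unfold Rdiv. apply Rmult_le_compat_r. lra. apply Rmult_le_compat_r. apply pow2_ge_0. lra. }
  pose proof (dist_le (S t) (E t) (I t) Ss Es Is).
  unfold sum in Hrs. lra.
Qed.


Lemma lim_conv (f : R -> R) l :
  (forall eps, 0 < eps -> exists T, forall t, T <= t -> Rabs (f t - l) < eps) -> is_lim f p_infty l.
Proof.
  intros H. apply is_lim_spec. intros eps. destruct (H eps (cond_pos eps)) as [T HT].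
  exists T. intros x Hx. apply HT; lra.
Qed.

Theorem mainTheorem12 (N mu beta sigma gamma p rho : R) :
  0 < N -> 0 < mu -> 0 < beta -> 0 < sigma -> 0 < gamma -> 0 < p ->
  0 < rho < 1 ->
  basic_R0 N mu beta sigma gamma p rho > 1 ->
  GAS_interior N mu beta sigma gamma p rho
    (Se N mu beta sigma gamma rho)
    (Ee N mu beta sigma gamma p rho)
    (Ie N mu beta sigma gamma p rho).
Proof.
  intros HN Hmu Hbeta Hsigma Hgamma Hp Hrho HR0.
  set (Lam := mu * N). set (b := beta * (1 - rho) / N). set (d := p / N + mu).
  set (a := sigma + mu). set (g := gamma + mu).
  assert (Hr1 : 0 < 1 - rho) by lra.
  assert (Hb : 0 < b) by (unfold b; pos).
  assert (Hd : 0 < d) by (unfold d; assert (0 < p / N) by pos; lra).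
  assert (Ha : 0 < a) by (unfold a; lra).
  assert (Hg : 0 < g) by (unfold g; lra).
  assert (HSs : 0 < Se N mu beta sigma gamma rho) by (unfold Se; pos).
  assert (Hnum : (sigma + mu) * (gamma + mu) * (p + mu * N) < mu * N * sigma * beta * (1 - rho)).
  { unfold basic_R0 in HR0.
    assert (0 < (sigma + mu) * (gamma + mu) * (p + mu * N)) by (pos; assert (0 < mu * N) by pos; lra).
    apply Rmult_gt_compat_r with (r := (sigma + mu) * (gamma + mu) * (p + mu * N)) in HR0; auto.
    unfold Rdiv in HR0. rewrite Rmult_assoc, Rinv_l in HR0 by lra. lra. }
  assert (HIs : 0 < Ie N mu beta sigma gamma p rho) by (unfold Ie; apply Rdiv_lt_0_compat; [lra|pos]).
  assert (Hpar : params_ok Lam b d a sigma g (Se N mu beta sigma gamma rho)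
     (Ee N mu beta sigma gamma p rho) (Ie N mu beta sigma gamma p rho)).
  { unfold params_ok. repeat split; auto.
    - unfold Ee, Ie, Se, b, a. field. repeat split; lra.
    - unfold g, b, Se, a. field. repeat split; lra.
    - unfold Lam, b, d, Se, Ie. field. repeat split; lra. }
  assert (Hsol : forall S E I, is_solution N mu beta sigma gamma p rho S E I -> asol Lam b d a sigma g S E I).
  { intros S E I [Hder Hrest]. split; auto. intros t Ht. destruct (Hder t Ht) as (D1&D2&D3).
    replace (fS' Lam b d (S t) (E t) (I t)) with (fS N mu beta p rho (S t) (E t) (I t))
      by (unfold fS, fS', Lam, b, d; ring).
    replace (fE' b a (S t) (E t) (I t)) with (fE N mu beta sigma rho (S t) (E t) (I t))
      by (unfold fE, fE', b, a; ring).
    replace (fI' sigma g (S t) (E t) (I t)) with (fI mu sigma gamma (S t) (E t) (I t))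
      by (unfold fI, fI', g; ring).
    auto. }
  split.
  - intros eps Heps. destruct (stability _ _ _ _ _ _ _ _ _ Hpar eps Heps) as [dl [Hdl H]].
    exists dl. split; auto. intros S E I HS Hint Hdist t Ht.
    destruct Hint as (P1&P2&P3&_).
    apply (H S E I (Hsol S E I HS)); auto. split; auto.
  - intros S E I HS Hint. destruct Hint as (P1&P2&P3&_).
    destruct (convergence _ _ _ _ _ _ _ _ _ _ _ _ Hpar (Hsol S E I HS)) as (C1&C2&C3).
    split; auto. split; [|split]; apply lim_conv; auto.
Qed.
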